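(* Let $\eta>0$, $\alpha\in(0,1)$, and run the generalized share algorithm with the mixing rule $\hat p_{j,t}=(1-\alpha)v_{j,t}+\alpha\,w_{j,t}/Z_t$ for $t\ge2$, where $w_{j,t}=\max_{s\le t}v_{j,s}$ and $Z_t=\sum_{i=1}^dw_{i,t}$. Then for all $T\ge1$, all loss vectors $\ell_1,\dots,\ell_T\in[0,1]^d$, and all $q_1,\dots,q_T\in\Delta_d$, \[ \sum_{t=1}^T\hat p_t^\top\ell_t-\sum_{t=1}^Tq_t^\top\ell_t\le\frac{n(q_1^T)\ln d}{\eta}+\frac\eta8T+\frac{m(q_1^T)}{\eta}\ln\frac T\alpha+\frac{T-m(q_1^T)-1}{\eta}\ln\frac1{1-\alpha}. \]
   Context: Let $d\ge1$ and $\Delta_d=\{q\in[0,1]^d:\sum_{i=1}^d q_i=1\}$. The generalized share algorithm with learning rate $\eta>0$ and mixing functions $\psi_t:[0,1]^{td}\to\Delta_d$ ($t\ge2$) works as follows: $\hat p_1=v_1=(1/d,\dots,1/d)$. At each round $t=1,2,\dots$ it predicts $\hat p_t=(\hat p_{1,t},\dots,\hat p_{d,t})\in\Delta_d$, observes a loss vector $\ell_t=(\ell_{1,t},\dots,\ell_{d,t})\in[0,1]^d$ (arbitrary), and suffers loss $\hat p_t^\top\ell_t$. It then forms the pre-weights $v_{j,t+1}=\hat p_{j,t}e^{-\eta\ell_{j,t}}/\sum_{i=1}^d\hat p_{i,t}e^{-\eta\ell_{i,t}}$ for $j=1,\dots,d$, sets $v_{t+1}=(v_{1,t+1},\dots,v_{d,t+1})$,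 and defines $\hat p_{t+1}=\psi_{t+1}(V_{t+1})$ where $V_{t+1}=[v_{i,s}]_{1\le i\le d,1\le s\le t+1}$ is the $d\times(t+1)$ matrix of all pre-weights so far. For $x,y\in\mathbb R_+^d$, $D_{\mathrm{TV}}(x,y)=\sum_{i:\,x_i\ge y_i}(x_i-y_i)$; for $u_1,\dots,u_T\in\mathbb R_+^d$ (with $u_t=(u_{1,t},\dots,u_{d,t})$), $m(u_1^T)=\sum_{t=2}^T D_{\mathrm{TV}}(u_t,u_{t-1})$ and $n(u_1^T)=\sum_{i=1}^d\max_{1\le t\le T}u_{i,t}$. *)

(* Defs.v *)
From Stdlib Require Import Reals Lra Lia.
Open Scope R_scope.

(* Experts are indexed 0..d-1; rounds are indexed 1,2,3,...
   A sequence of vectors in R^d is a function  nat (round) -> nat (expert) -> R. *)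

Fixpoint rsum (n : nat) (f : nat -> R) : R :=
  match n with
  | O => 0
  | S n' => rsum n' f + f n'
  end.

Definition tsum (T : nat) (f : nat -> R) : R := rsum T (fun k => f (S k)).

(* maxupto f n = max_{1 <= t <= n} f t  (meaningful for n >= 1) *)
Fixpoint maxupto (f : nat -> R) (n : nat) : R :=
  match n with
  | O => f 1%nat
  | S n' => Rmax (maxupto f n') (f n)
  end.

Definition DTV (d : nat) (x y : nat -> R) : R :=
  rsum d (fun i => if Rle_dec (y i) (x i) then x i - y i else 0).

Definition m_shift (d T : nat) (u : nat -> nat -> R) : R :=
  rsum (T - 1) (fun k => DTV d (u (k + 2)%nat) (u (k + 1)%nat)).

Definition n_sparse (d T : nat) (u : nat -> nat -> R) : R :=
  rsum d (fun i => maxupto (fun t => u t i) T).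

Definition in_simplex (d : nat) (q : nat -> R) : Prop :=
  (forall i, (i < d)%nat -> 0 <= q i <= 1) /\ rsum d q = 1.

(* State of the generalized share algorithm with the mixing rule
   p_t = (1-alpha) v_t + alpha w_t / Z_t  (t >= 2),
   where w_t = max_{s <= t} v_s (componentwise) and Z_t = sum_i w_{i,t}.
   share_state ... t = (v_t, w_t, p_t) for t >= 1 (t = 0 is a dummy copy of t = 1). *)
Fixpoint share_state (d : nat) (eta alpha : R) (l : nat -> nat -> R) (t : nat)
  : (nat -> R) * (nat -> R) * (nat -> R) :=
  let unif := fun _ : nat => 1 / INR d in
  match t with
  | O => (unif, unif, unif)
  | S t' =>
    match t' with
    | O => (unif, unif, unif)
    | S _ =>
      let '(_, w', p') := share_state d eta alpha l t' in
      let Zv := rsum d (fun k => p' k * exp (- eta * l t' k)) in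
      let v := fun j => p' j * exp (- eta * l t' j) / Zv in
      let w := fun j => Rmax (w' j) (v j) in
      let Z := rsum d w in
      let p := fun j => (1 - alpha) * v j + alpha * w j / Z in
      (v, w, p)
    end
  end.

Definition share_pred (d : nat) (eta alpha : R) (l : nat -> nat -> R) (t : nat) : nat -> R :=
  snd (share_state d eta alpha l t).

(* Main.v *)
Require Import Defs.
From Coquelicot Require Import Coquelicot.
From Stdlib Require Import Reals Lra Lia FunctionalExtensionality.
Open Scope R_scope.

Lemma decr_from_derive f df a b : a <= b ->
  (forall x, a <= x <= b -> is_derive f x (df x)) ->
  (forall x, a <= x <= b -> df x <= 0) -> f b <= f a.
Proof.
  intros Hab Hd Hn.
  destruct (Req_dec a b) as [->|Hne]; [lra|].
  destruct (MVT_gen f a b df) as [c [Hc Heq]].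
  - intros x Hx. apply Hd. rewrite Rmin_left in Hx by lra. rewrite Rmax_right in Hx by lra. lra.
  - intros x Hx. rewrite Rmin_left in Hx by lra. rewrite Rmax_right in Hx by lra.
    apply derivable_continuous_pt. exists (df x). apply is_derive_Reals. apply Hd. lra.
  - rewrite Rmin_left in Hc by lra. rewrite Rmax_right in Hc by lra.
    assert (df c * (b - a) <= 0). { apply Rmult_le_0_r. apply Hn; lra. lra. }
    lra.
Qed.

Lemma exp_convex eta x : 0 < eta -> 0 <= x <= 1 ->
  exp (- eta * x) <= 1 - x + x * exp (- eta).
Proof.
  intros He Hx.
  destruct (Req_dec x 0) as [Hx0|H0].
  { subst x. rewrite Rmult_0_r, exp_0. lra. }
  destruct (Req_dec x 1) as [->|H1]. { rewrite Rmult_1_r. lra. }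
  set (phi := fun y => exp (- eta * y)).
  assert (Hd : forall y, is_derive phi y (- eta * exp (- eta * y))).
  { intro y. unfold phi. auto_derive. { easy. } ring. }
  destruct (MVT_gen phi 0 x (fun y => - eta * exp (- eta * y))) as [c1 [Hc1 E1]].
  { intros; apply Hd. }
  { intros y _. apply derivable_continuous_pt. eexists. apply is_derive_Reals. apply Hd. }
  destruct (MVT_gen phi x 1 (fun y => - eta * exp (- eta * y))) as [c2 [Hc2 E2]].
  { intros; apply Hd. }
  { intros y _. apply derivable_continuous_pt. eexists. apply is_derive_Reals. apply Hd. }
  rewrite Rmin_left in Hc1 by lra. rewrite Rmax_right in Hc1 by lra.
  rewrite Rmin_left in Hc2 by lra. rewrite Rmax_right in Hc2 by lra.
  unfold phi in E1, E2. rewrite Rmult_0_r, exp_0 in E1. rewrite Rmult_1_r in E2.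
  assert (exp (- eta * c1) >= exp (- eta * c2)).
  { apply Rle_ge. destruct (Req_dec c1 c2) as [->|Hn]; [lra|]. left. apply exp_increasing. assert (c1 < c2) by lra. nra. }
  assert (0 < exp (- eta * c2)) by apply exp_pos.
  assert (x * (1 - x) > 0) by nra.
  assert (- eta * exp (- eta * c1) <= - eta * exp (- eta * c2)) by nra.
  assert (- eta * exp (- eta * c1) * (x * (1-x)) <= - eta * exp (- eta * c2) * (x*(1-x))).
  { apply Rmult_le_compat_r; lra. }
  nra.
Qed.

Lemma psi_bound mu s : 0 <= mu <= 1 -> 0 <= s ->
  ln (1 - mu + mu * exp (- s)) + s * mu <= s ^ 2 / 8.
Proof.
  intros Hmu Hs.
  assert (HD : forall x, 0 <= x -> 0 < 1 - mu + mu * exp (- x)).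
  { intros x Hx. assert (0 < exp (- x)) by apply exp_pos.
    assert (exp (- x) <= 1). { rewrite <- exp_0. destruct (Req_dec x 0) as [E|E]. { subst x. rewrite Ropp_0. lra. } left. apply exp_increasing. lra. }
    nra. }
  set (g := fun x => mu - mu * exp (- x) / (1 - mu + mu * exp (- x)) - x / 4).
  assert (Hg : forall x, 0 <= x -> g x <= 0).
  { intros x Hx.
    assert (g x <= g 0).
    { apply (decr_from_derive g (fun y => mu * (1 - mu) * exp (- y) / (1 - mu + mu * exp (- y)) ^ 2 - 1/4)); [lra| |].
      - intros y Hy. unfold g. specialize (HD y (proj1 Hy)). auto_derive.
        + lra.
        + field. lra.
      - intros y Hy. specialize (HD y (proj1 Hy)). assert (0 < exp (- y)) by apply exp_pos.
        set (a := 1 - mu) in *. set (b := mu * exp (- y)) in *.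
        assert (a * b * 4 <= (a + b) ^ 2). { assert (E : (a+b)^2 - a*b*4 = (a-b)^2) by ring. pose proof (pow2_ge_0 (a-b)). lra. }
        replace (mu * (1 - mu) * exp (- y)) with (a * b) by (unfold a, b; ring).
        assert (0 < a + b) by lra. assert (0 < (a+b)^2) by (apply pow_lt; lra).
        assert (a * b / (a + b) ^ 2 <= 1/4).
        { apply (Rmult_le_reg_r ((a+b)^2)); [lra|]. unfold Rdiv. rewrite Rmult_assoc, Rinv_l by lra. lra. }
        replace (mu * a * exp (- y)) with (a * b) by (unfold b; ring). lra. }
    unfold g at 2 in H. rewrite Ropp_0, exp_0 in H.
    replace (mu - mu * 1 / (1 - mu + mu * 1) - 0 / 4) with 0 in H by (field; lra). lra. }
  set (f := fun x => ln (1 - mu + mu * exp (- x)) + x * mu - x ^ 2 / 8).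
  assert (f s <= f 0).
  { apply (decr_from_derive f g); [lra| |].
    - intros y Hy. unfold f, g. specialize (HD y (proj1 Hy)). auto_derive.
      + lra.
      + field. lra.
    - intros y Hy. apply Hg. lra. }
  unfold f in H. rewrite Ropp_0, exp_0 in H.
  replace (1 - mu + mu * 1) with 1 in H by ring. rewrite ln_1 in H. lra.
Qed.

Lemma rsum_ext n f g : (forall i, (i < n)%nat -> f i = g i) -> rsum n f = rsum n g.
Proof. induction n; simpl; intros H; [reflexivity|]. rewrite IHn by (intros; apply H; lia). rewrite H by lia. reflexivity. Qed.

Lemma rsum_le n f g : (forall i, (i < n)%nat -> f i <= g i) -> rsum n f <= rsum n g.
Proof. induction n; simpl; intros H; [lra|]. pose proof (IHn (fun i Hi => H i ltac:(lia))). pose proof (H n ltac:(lia)). lra. Qed.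

Lemma rsum_plus n f g : rsum n (fun i => f i + g i) = rsum n f + rsum n g.
Proof. induction n; simpl; [lra|]. rewrite IHn. ring. Qed.

Lemma rsum_minus n f g : rsum n (fun i => f i - g i) = rsum n f - rsum n g.
Proof. induction n; simpl; [lra|]. rewrite IHn. ring. Qed.

Lemma rsum_scal n c f : rsum n (fun i => c * f i) = c * rsum n f.
Proof. induction n; simpl; [lra|]. rewrite IHn. ring. Qed.

Lemma rsum_const n c : rsum n (fun _ => c) = INR n * c.
Proof. induction n; [simpl; lra|]. cbn [rsum]. rewrite IHn, S_INR. ring. Qed.

Lemma rsum_swap n m (f : nat -> nat -> R) :
  rsum n (fun i => rsum m (fun k => f i k)) = rsum m (fun k => rsum n (fun i => f i k)).
Proof. induction n; simpl.
  - induction m; simpl; [lra|]. rewrite <- IHm. lra.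
  - rewrite IHn. rewrite <- rsum_plus. reflexivity. Qed.

Lemma rsum_nonneg n f : (forall i, (i < n)%nat -> 0 <= f i) -> 0 <= rsum n f.
Proof. intros H. replace 0 with (rsum n (fun _ => 0)). apply rsum_le; auto.
  rewrite rsum_const. ring. Qed.

Lemma rsum_pos n f : (0 < n)%nat -> (forall i, (i < n)%nat -> 0 < f i) -> 0 < rsum n f.
Proof. destruct n; [lia|]. intros _ H. simpl. pose proof (rsum_nonneg n f (fun i Hi => Rlt_le _ _ (H i ltac:(lia)))).
  pose proof (H n ltac:(lia)). lra. Qed.

Lemma rsum_term_le n f j : (forall i, (i < n)%nat -> 0 <= f i) -> (j < n)%nat -> f j <= rsum n f.
Proof. induction n; intros H Hj; [lia|]. simpl.
  destruct (Nat.eq_dec j n) as [->|Hne].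
  - pose proof (rsum_nonneg n f (fun i Hi => H i ltac:(lia))). lra.
  - pose proof (IHn (fun i Hi => H i ltac:(lia)) ltac:(lia)). pose proof (H n ltac:(lia)). lra. Qed.

Lemma hoeffding d (p l : nat -> R) eta : 0 < eta -> (0 < d)%nat ->
  (forall i, (i < d)%nat -> 0 < p i) -> rsum d p = 1 ->
  (forall i, (i < d)%nat -> 0 <= l i <= 1) ->
  ln (rsum d (fun i => p i * exp (- eta * l i))) <= - eta * rsum d (fun i => p i * l i) + eta ^ 2 / 8.
Proof.
  intros He Hd Hp Hs Hl.
  set (mu := rsum d (fun i => p i * l i)).
  assert (Hmu : 0 <= mu <= 1).
  { split. apply rsum_nonneg. intros i Hi. pose proof (Hp i Hi); pose proof (Hl i Hi). nra.
    rewrite <- Hs. apply rsum_le. intros i Hi. pose proof (Hp i Hi); pose proof (Hl i Hi). nra. }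
  assert (Hle : rsum d (fun i => p i * exp (- eta * l i)) <= 1 - mu + mu * exp (- eta)).
  { replace (1 - mu + mu * exp (- eta)) with (rsum d (fun i => p i * (1 - l i + l i * exp (- eta)))).
    - apply rsum_le. intros i Hi. apply Rmult_le_compat_l. left; auto. apply exp_convex; auto.
    - replace (fun i => p i * (1 - l i + l i * exp (- eta))) with
        (fun i => p i - (p i * l i) + exp (- eta) * (p i * l i)) by (apply functional_extensionality; intro; ring).
      rewrite rsum_plus, rsum_minus, rsum_scal. unfold mu. rewrite Hs. ring. }
  assert (Hpos : 0 < rsum d (fun i => p i * exp (- eta * l i))).
  { apply rsum_pos; auto. intros i Hi. apply Rmult_lt_0_compat; auto. apply exp_pos. }
  pose proof (psi_bound mu eta Hmu (Rlt_le _ _ He)).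
  pose proof (ln_le _ _ Hpos Hle). lra.
Qed.

Definition Vt d eta alpha l t := fst (fst (share_state d eta alpha l t)).
Definition Wt d eta alpha l t := snd (fst (share_state d eta alpha l t)).
Definition Pt d eta alpha l t := snd (share_state d eta alpha l t).

Lemma state_succ d eta alpha l t : (1 <= t)%nat ->
  share_state d eta alpha l (S t) =
  (let Zv := rsum d (fun k => Pt d eta alpha l t k * exp (- eta * l t k)) in
   let v := fun j => Pt d eta alpha l t j * exp (- eta * l t j) / Zv in
   let w := fun j => Rmax (Wt d eta alpha l t j) (v j) in
   (v, w, fun j => (1 - alpha) * v j + alpha * w j / rsum d w)).
Proof.
  intros Ht. destruct t; [lia|]. unfold Pt, Wt.
  change (share_state d eta alpha l (S (S t))) with
   (let unif := fun _ : nat => 1 / INR d in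
    let '(_, w', p') := share_state d eta alpha l (S t) in
      let Zv := rsum d (fun k => p' k * exp (- eta * l (S t) k)) in
      let v := fun j => p' j * exp (- eta * l (S t) j) / Zv in
      let w := fun j => Rmax (w' j) (v j) in
      let Z := rsum d w in
      let p := fun j => (1 - alpha) * v j + alpha * w j / Z in
      (v, w, p)).
  destruct (share_state d eta alpha l (S t)) as [[a b] c]. reflexivity.
Qed.

Lemma V_succ d eta alpha l t j : (1 <= t)%nat ->
  Vt d eta alpha l (S t) j = Pt d eta alpha l t j * exp (- eta * l t j) /
     rsum d (fun k => Pt d eta alpha l t k * exp (- eta * l t k)).
Proof. intros H. unfold Vt at 1. rewrite state_succ by exact H. reflexivity. Qed.

Lemma W_succ d eta alpha l t j : (1 <= t)%nat ->
  Wt d eta alpha l (S t) j = Rmax (Wt d eta alpha l t j) (Vt d eta alpha l (S t) j).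
Proof. intros H. unfold Wt at 1. rewrite (V_succ _ _ _ _ _ _ H). rewrite state_succ by exact H. reflexivity. Qed.

Lemma P_succ d eta alpha l t j : (1 <= t)%nat ->
  Pt d eta alpha l (S t) j = (1 - alpha) * Vt d eta alpha l (S t) j
     + alpha * Wt d eta alpha l (S t) j / rsum d (Wt d eta alpha l (S t)).
Proof. intros H. unfold Pt at 1. unfold Vt, Wt. rewrite state_succ by exact H. reflexivity. Qed.

Lemma state_one d eta alpha l : share_state d eta alpha l 1 = (fun _ => 1 / INR d, fun _ => 1 / INR d, fun _ => 1 / INR d).
Proof. reflexivity. Qed.

Definition Inv d eta alpha l t :=
  (forall i, (i < d)%nat -> 0 < Pt d eta alpha l t i) /\ rsum d (Pt d eta alpha l t) = 1 /\
  (forall i, (i < d)%nat -> 0 < Vt d eta alpha l t i) /\ rsum d (Vt d eta alpha l t) = 1 /\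
  (forall i, (i < d)%nat -> 1 / INR d <= Wt d eta alpha l t i <= 1) /\
  (forall i, (i < d)%nat -> Vt d eta alpha l t i <= Wt d eta alpha l t i) /\
  rsum d (Wt d eta alpha l t) <= INR t.

Lemma rsum_div n f c : rsum n (fun i => f i / c) = rsum n f / c.
Proof. unfold Rdiv. rewrite <- (Rmult_comm (/ c)). rewrite <- rsum_scal.
  apply rsum_ext. intros; ring. Qed.

Lemma inv_all d eta alpha l t : (1 <= d)%nat -> 0 < alpha < 1 -> (1 <= t)%nat -> Inv d eta alpha l t.
Proof.
  intros Hd Ha Ht. assert (HdR : 0 < INR d) by (apply lt_0_INR; lia).
  assert (Hd1 : 1 / INR d <= 1). { apply (Rmult_le_reg_r (INR d)); auto. unfold Rdiv. rewrite Rmult_assoc, Rinv_l by lra.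
    pose proof (le_INR 1 d Hd). simpl in H. lra. }
  induction t as [|t IH]; [lia|].
  destruct (Nat.eq_dec t 0) as [->|Ht0].
  - unfold Inv, Pt, Vt, Wt. rewrite state_one. simpl fst; simpl snd.
    assert (E : rsum d (fun _ => 1 / INR d) = 1) by (rewrite rsum_const; field; lra).
    rewrite E. assert (0 < 1 / INR d) by (apply Rdiv_lt_0_compat; lra).
    repeat split; intros; try lra. simpl. lra.
  - specialize (IH ltac:(lia)). destruct IH as (HP & HPs & HV & HVs & HW & HVW & HZ).
    assert (Ht1 : (1 <= t)%nat) by lia.
    set (Zv := rsum d (fun k => Pt d eta alpha l t k * exp (- eta * l t k))).
    assert (HZv : 0 < Zv). { apply rsum_pos; [lia|]. intros i Hi. apply Rmult_lt_0_compat; auto. apply exp_pos. }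
    assert (HV' : forall i, (i < d)%nat -> 0 < Vt d eta alpha l (S t) i).
    { intros i Hi. rewrite V_succ by exact Ht1. apply Rdiv_lt_0_compat; auto. apply Rmult_lt_0_compat; auto. apply exp_pos. }
    assert (HVs' : rsum d (Vt d eta alpha l (S t)) = 1).
    { rewrite (rsum_ext _ _ (fun j => Pt d eta alpha l t j * exp (- eta * l t j) / Zv)).
      rewrite rsum_div. fold Zv. field. lra. intros i Hi. apply V_succ; exact Ht1. }
    assert (HV1 : forall i, (i < d)%nat -> Vt d eta alpha l (S t) i <= 1).
    { intros i Hi. rewrite <- HVs'. apply rsum_term_le; auto. intros; left; auto. }
    assert (HW' : forall i, (i < d)%nat -> 1 / INR d <= Wt d eta alpha l (S t) i <= 1).
    { intros i Hi. rewrite W_succ by exact Ht1. specialize (HW i Hi). specialize (HV1 i Hi).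
      split. eapply Rle_trans; [|apply Rmax_l]. lra. apply Rmax_lub; lra. }
    assert (HVW' : forall i, (i < d)%nat -> Vt d eta alpha l (S t) i <= Wt d eta alpha l (S t) i).
    { intros i Hi. rewrite W_succ by exact Ht1. apply Rmax_r. }
    assert (HZ' : rsum d (Wt d eta alpha l (S t)) <= INR (S t)).
    { rewrite S_INR. eapply Rle_trans with (rsum d (fun j => Wt d eta alpha l t j + Vt d eta alpha l (S t) j)).
      - apply rsum_le. intros i Hi. rewrite W_succ by exact Ht1. specialize (HW i Hi). specialize (HV' i Hi).
        assert (0 < 1 / INR d) by (apply Rdiv_lt_0_compat; lra).
        apply Rmax_lub; lra.
      - rewrite rsum_plus, HVs'. lra. }
    assert (HZpos : 0 < rsum d (Wt d eta alpha l (S t))).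
    { apply rsum_pos; [lia|]. intros i Hi. specialize (HW' i Hi). assert (0 < 1 / INR d) by (apply Rdiv_lt_0_compat; lra). lra. }
    unfold Inv. repeat split; auto; try (intros; apply HW'; auto).
    + intros i Hi. rewrite P_succ by exact Ht1. specialize (HV' i Hi). specialize (HW' i Hi).
      assert (0 < 1 / INR d) by (apply Rdiv_lt_0_compat; lra).
      assert (0 <= alpha * Wt d eta alpha l (S t) i / rsum d (Wt d eta alpha l (S t))).
      { apply Rdiv_le_0_compat; [|lra]. apply Rmult_le_pos; lra. }
      nra.
    + rewrite (rsum_ext _ _ (fun j => (1 - alpha) * Vt d eta alpha l (S t) j
         + alpha * Wt d eta alpha l (S t) j / rsum d (Wt d eta alpha l (S t)))).
      rewrite rsum_plus, rsum_scal, rsum_div, rsum_scal, HVs'. field. lra.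
      intros i Hi. apply P_succ; exact Ht1.
Qed.

Lemma step_regret d eta alpha l (q : nat -> R) t : (1 <= d)%nat -> 0 < eta -> 0 < alpha < 1 -> (1 <= t)%nat ->
  (forall i, (i < d)%nat -> 0 <= l t i <= 1) -> in_simplex d q ->
  rsum d (fun i => Pt d eta alpha l t i * l t i) - rsum d (fun i => q i * l t i)
  <= / eta * rsum d (fun i => q i * (ln (Vt d eta alpha l (S t) i) - ln (Pt d eta alpha l t i))) + eta / 8.
Proof.
  intros Hd He Ha Ht Hl [Hq Hqs].
  destruct (inv_all d eta alpha l t Hd Ha Ht) as (HP & HPs & _).
  set (Zv := rsum d (fun k => Pt d eta alpha l t k * exp (- eta * l t k))).
  assert (HZv : 0 < Zv). { apply rsum_pos; [lia|]. intros i Hi. apply Rmult_lt_0_compat; auto. apply exp_pos. }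
  rewrite (rsum_ext d (fun i => q i * (ln (Vt d eta alpha l (S t) i) - ln (Pt d eta alpha l t i))) (fun i => - eta * (q i * l t i) + (- ln Zv) * q i)).
  2:{ intros i Hi. rewrite V_succ by exact Ht. fold Zv. unfold Rdiv.
      assert (0 < exp (- eta * l t i)) by apply exp_pos. specialize (HP i Hi).
      rewrite ln_mult, ln_mult, ln_Rinv, ln_exp; try ring;
        repeat (apply Rmult_lt_0_compat || apply Rinv_0_lt_compat || auto). }
  rewrite rsum_plus, rsum_scal, rsum_scal, Hqs.
  pose proof (hoeffding d (Pt d eta alpha l t) (l t) eta He ltac:(lia) HP HPs Hl). fold Zv in H.
  replace (/ eta * (- eta * rsum d (fun i => q i * l t i) + - ln Zv * 1) + eta / 8)
    with (- rsum d (fun i => q i * l t i) + / eta * (- ln Zv + eta ^ 2 / 8)) by (field; apply Rgt_not_eq; exact He).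
  assert (eta * rsum d (fun i => Pt d eta alpha l t i * l t i) <= - ln Zv + eta ^ 2 / 8) by lra.
  assert (rsum d (fun i => Pt d eta alpha l t i * l t i) <= / eta * (- ln Zv + eta ^ 2 / 8)).
  { apply (Rmult_le_reg_l eta); auto. rewrite <- Rmult_assoc, Rinv_r by lra. lra. }
  lra.
Qed.

Definition cc (q : nat -> nat -> R) (i k : nat) : R :=
  if Rle_dec (q (k + 1)%nat i) (q (k + 2)%nat i) then q (k + 2)%nat i - q (k + 1)%nat i else 0.

Lemma maxupto_S f n : maxupto f (S n) = Rmax (maxupto f n) (f (S n)).
Proof. reflexivity. Qed.

Lemma maxupto_ge f n : f (S n) <= maxupto f (S n).
Proof. rewrite maxupto_S. apply Rmax_r. Qed.

Lemma ln_inv_div x : 0 < x -> ln (1 / x) = - ln x.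
Proof. intros H. unfold Rdiv. rewrite Rmult_1_l. apply ln_Rinv; auto. Qed.

Lemma per_i d eta alpha l q T i : (1 <= d)%nat -> 0 < eta -> 0 < alpha < 1 -> (i < d)%nat ->
  (forall t, (1 <= t <= T)%nat -> in_simplex d (q t)) ->
  forall t', (S t' <= T)%nat ->
  rsum (S t') (fun k => q (S k) i * (ln (Vt d eta alpha l (S (S k)) i) - ln (Pt d eta alpha l (S k) i)))
  <= maxupto (fun s => q s i) (S t') * ln (INR d)
     - (maxupto (fun s => q s i) (S t') - q (S t') i) * (- ln (Wt d eta alpha l (S t') i))
     - q (S t') i * (- ln (Vt d eta alpha l (S (S t')) i))
     + rsum t' (fun k => (q (k + 2)%nat i - cc q i k) * ln (1 / (1 - alpha)) + cc q i k * ln (INR T / alpha)).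
Proof.
  intros Hd He Ha Hi Hq.
  assert (HdR : 0 < INR d) by (apply lt_0_INR; lia).
  induction t' as [|t' IH]; intros HT.
  - simpl rsum. unfold Pt at 1. rewrite state_one. simpl snd.
    rewrite ln_inv_div by exact HdR. simpl maxupto. rewrite Rmax_left by lra. apply Req_le. ring.
  - specialize (IH ltac:(lia)).
    cbn [rsum] in IH |- *.
    set (t := S t') in *. set (s := S (S t')) in *.
    assert (Ht1 : (1 <= t)%nat) by (unfold t; lia).
    assert (Hs1 : (1 <= s)%nat) by (unfold s; lia).
    assert (Ecc : cc q i t' = if Rle_dec (q t i) (q s i) then q s i - q t i else 0).
    { unfold cc, t, s. replace (t' + 1)%nat with (S t') by lia. replace (t' + 2)%nat with (S (S t')) by lia. reflexivity. }
    replace (t' + 2)%nat with s by (unfold s; lia).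
    rewrite Ecc. rewrite maxupto_S. fold s.
    destruct (Hq t ltac:(unfold t; lia)) as [Hqt _]. destruct (Hq s ltac:(unfold s; lia)) as [Hqs _].
    specialize (Hqt i Hi). specialize (Hqs i Hi).
    set (a := q t i) in *. set (a' := q s i) in *.
    set (c := if Rle_dec a a' then a' - a else 0).
    assert (Hc : 0 <= c /\ 0 <= a' - c /\ a' - c <= a).
    { unfold c. destruct (Rle_dec a a'); lra. }
    destruct (inv_all d eta alpha l t Hd Ha Ht1) as (_ & _ & _ & _ & HWt & _).
    destruct (inv_all d eta alpha l s Hd Ha Hs1) as (HPs & _ & HVs & _ & HWs & HVWs & HZs).
    destruct (inv_all d eta alpha l (S s) Hd Ha ltac:(lia)) as (_ & _ & HVs1 & _).
    specialize (HWt i Hi). specialize (HWs i Hi). specialize (HVWs i Hi). specialize (HPs i Hi). specialize (HVs i Hi).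
    assert (Hinvd : 0 < 1 / INR d) by (apply Rdiv_lt_0_compat; lra).
    assert (HZpos : 0 < rsum d (Wt d eta alpha l s)).
    { apply rsum_pos; [lia|]. intros j Hj. destruct (inv_all d eta alpha l s Hd Ha Hs1) as (_ & _ & _ & _ & HW' & _).
      specialize (HW' j Hj). lra. }
    assert (HPeq : Pt d eta alpha l s i = (1 - alpha) * Vt d eta alpha l s i
              + alpha * Wt d eta alpha l s i / rsum d (Wt d eta alpha l s)) by (apply P_succ; exact Ht1).
    assert (HTs : INR s <= INR T) by (apply le_INR; lia).
    assert (HZT : rsum d (Wt d eta alpha l s) <= INR T) by lra.
    assert (B1 : - ln (Pt d eta alpha l s i) <= ln (1 / (1 - alpha)) + - ln (Vt d eta alpha l s i)).
    { rewrite ln_inv_div by lra.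
      assert (0 <= alpha * Wt d eta alpha l s i / rsum d (Wt d eta alpha l s)).
      { apply Rdiv_le_0_compat; [|lra]. apply Rmult_le_pos; lra. }
      assert (H0 : ln ((1 - alpha) * Vt d eta alpha l s i) <= ln (Pt d eta alpha l s i)).
      { apply ln_le. apply Rmult_lt_0_compat; lra. lra. }
      rewrite ln_mult in H0 by lra. lra. }
    assert (B2 : - ln (Pt d eta alpha l s i) <= ln (INR T / alpha) + - ln (Wt d eta alpha l s i)).
    { assert (HT0 : 0 < INR T) by lra.
      assert (0 < alpha * Wt d eta alpha l s i) by (apply Rmult_lt_0_compat; lra).
      assert (alpha * Wt d eta alpha l s i / INR T <= alpha * Wt d eta alpha l s i / rsum d (Wt d eta alpha l s)).
      { unfold Rdiv. apply Rmult_le_compat_l; [lra|]. apply Rinv_le_contravar; auto. }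
      assert (0 <= (1 - alpha) * Vt d eta alpha l s i) by (apply Rmult_le_pos; lra).
      assert (H3 : ln (alpha * Wt d eta alpha l s i / INR T) <= ln (Pt d eta alpha l s i)).
      { apply ln_le. apply Rdiv_lt_0_compat; lra. lra. }
      unfold Rdiv in H3 |- *. rewrite ln_mult, ln_mult, ln_Rinv in H3 by (try apply Rinv_0_lt_compat; lra).
      rewrite ln_mult, ln_Rinv by (try apply Rinv_0_lt_compat; lra). lra. }
    assert (F1 : - ln (Wt d eta alpha l s i) <= - ln (Vt d eta alpha l s i)).
    { assert (ln (Vt d eta alpha l s i) <= ln (Wt d eta alpha l s i)) by (apply ln_le; lra). lra. }
    assert (F2 : - ln (Wt d eta alpha l s i) <= - ln (Wt d eta alpha l t i)).
    { assert (Wt d eta alpha l t i <= Wt d eta alpha l s i).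
      { unfold s. rewrite W_succ by exact Ht1. apply Rmax_l. }
      assert (ln (Wt d eta alpha l t i) <= ln (Wt d eta alpha l s i)) by (apply ln_le; lra). lra. }
    assert (F3 : - ln (Wt d eta alpha l s i) <= ln (INR d)).
    { assert (H : ln (1 / INR d) <= ln (Wt d eta alpha l s i)) by (apply ln_le; lra).
      rewrite ln_inv_div in H by lra. lra. }
    assert (M1 : a <= maxupto (fun s0 => q s0 i) t) by (apply (maxupto_ge (fun s0 => q s0 i) t')).
    set (Mt := maxupto (fun s0 => q s0 i) t) in *.
    assert (M2 : Mt <= Rmax Mt a') by apply Rmax_l.
    assert (M3 : a' <= Rmax Mt a') by apply Rmax_r.
    set (Ms := Rmax Mt a') in *.
    set (lam := ln (1 / (1 - alpha))) in *. set (kap := ln (INR T / alpha)) in *.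
    set (D := ln (INR d)) in *.
    set (Ls := - ln (Vt d eta alpha l s i)) in *.
    set (Wls := - ln (Wt d eta alpha l s i)) in *.
    set (Wlt := - ln (Wt d eta alpha l t i)) in *.
    set (nP := - ln (Pt d eta alpha l s i)) in *.
    assert (G1 : (a' - c) * nP <= (a' - c) * (lam + Ls)) by (apply Rmult_le_compat_l; lra).
    assert (G2 : c * nP <= c * (kap + Wls)) by (apply Rmult_le_compat_l; lra).
    assert (h1 : 0 <= (a - (a' - c)) * (Ls - Wls)) by (apply Rmult_le_pos; lra).
    assert (h2 : 0 <= (Mt - a) * (Wlt - Wls)) by (apply Rmult_le_pos; lra).
    assert (h3 : 0 <= (Ms - Mt) * (D - Wls)) by (apply Rmult_le_pos; lra).
    change (S t) with s. fold a' Ms Wls.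
    replace (ln (Pt d eta alpha l s i)) with (- nP) by (unfold nP; ring).
    replace (ln (Vt d eta alpha l s i)) with (- Ls) by (unfold Ls; ring).
    nra.
Qed.

Theorem mainTheorem10 (d : nat) (eta alpha : R) (T : nat)
  (l q : nat -> nat -> R)
  (Hd : (1 <= d)%nat) (Heta : 0 < eta) (Halpha : 0 < alpha < 1) (HT : (1 <= T)%nat)
  (Hl : forall t i, (1 <= t <= T)%nat -> (i < d)%nat -> 0 <= l t i <= 1)
  (Hq : forall t, (1 <= t <= T)%nat -> in_simplex d (q t)) :
  tsum T (fun t => rsum d (fun i => share_pred d eta alpha l t i * l t i))
  - tsum T (fun t => rsum d (fun i => q t i * l t i))
  <= n_sparse d T q * ln (INR d) / eta + eta / 8 * INR T
     + m_shift d T q / eta * ln (INR T / alpha)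
     + (INR T - m_shift d T q - 1) / eta * ln (1 / (1 - alpha)).
Proof.
  set (X := fun t => rsum d (fun i => q t i * (ln (Vt d eta alpha l (S t) i) - ln (Pt d eta alpha l t i)))).
  assert (S1 : tsum T (fun t => rsum d (fun i => share_pred d eta alpha l t i * l t i))
              - tsum T (fun t => rsum d (fun i => q t i * l t i))
              <= / eta * rsum T (fun k => X (S k)) + INR T * (eta / 8)).
  { unfold tsum. rewrite <- rsum_minus, <- rsum_scal, <- rsum_const, <- rsum_plus.
    apply rsum_le. intros k Hk. apply step_regret; auto. lia.
    intros i Hi. apply Hl; auto; lia. apply Hq; lia. }
  destruct T as [|T']; [lia|].
  set (lam := ln (1 / (1 - alpha))) in *. set (kap := ln (INR (S T') / alpha)) in *.
  set (R_ := fun i => rsum T' (fun k => (q (k + 2)%nat i - cc q i k) * lam + cc q i k * kap)).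
  assert (S2 : rsum (S T') (fun k => X (S k)) <= rsum d (fun i => maxupto (fun s => q s i) (S T') * ln (INR d) + R_ i)).
  { unfold X. rewrite rsum_swap. apply rsum_le. intros i Hi.
    pose proof (per_i d eta alpha l q (S T') i Hd Heta Halpha Hi Hq T' ltac:(lia)) as P.
    fold lam kap in P. fold (R_ i) in P.
    assert (HqT : 0 <= q (S T') i) by (apply (proj1 (Hq (S T') ltac:(lia))); auto).
    assert (HM : q (S T') i <= maxupto (fun s => q s i) (S T')) by apply (maxupto_ge (fun s => q s i) T').
    destruct (inv_all d eta alpha l (S T') Hd Halpha ltac:(lia)) as (_ & _ & _ & _ & HW & _).
    destruct (inv_all d eta alpha l (S (S T')) Hd Halpha ltac:(lia)) as (_ & _ & HV & HVs & _).
    specialize (HW i Hi).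
    assert (HV1 : Vt d eta alpha l (S (S T')) i <= 1).
    { rewrite <- HVs. apply rsum_term_le; auto. intros; left; auto. }
    assert (HdR : 0 < INR d) by (apply lt_0_INR; lia).
    assert (0 < 1 / INR d) by (apply Rdiv_lt_0_compat; lra).
    assert (ln (Wt d eta alpha l (S T') i) <= 0).
    { rewrite <- ln_1. apply ln_le; lra. }
    assert (ln (Vt d eta alpha l (S (S T')) i) <= 0).
    { rewrite <- ln_1. apply ln_le; auto. }
    assert (0 <= (maxupto (fun s => q s i) (S T') - q (S T') i) * (- ln (Wt d eta alpha l (S T') i))) by (apply Rmult_le_pos; lra).
    assert (0 <= q (S T') i * (- ln (Vt d eta alpha l (S (S T')) i))) by (apply Rmult_le_pos; lra).
    lra. }
  assert (S3 : rsum d R_ = (INR T' - m_shift d (S T') q) * lam + m_shift d (S T') q * kap).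
  { unfold R_, m_shift. rewrite rsum_swap. replace (S T' - 1)%nat with T' by lia.
    rewrite (rsum_ext T' _ (fun k => (1 - DTV d (q (k + 2)%nat) (q (k + 1)%nat)) * lam + DTV d (q (k + 2)%nat) (q (k + 1)%nat) * kap)).
    - rewrite (rsum_ext T' (fun k => (1 - DTV d (q (k + 2)%nat) (q (k + 1)%nat)) * lam + DTV d (q (k + 2)%nat) (q (k + 1)%nat) * kap)
                 (fun k => lam * 1 - lam * DTV d (q (k + 2)%nat) (q (k + 1)%nat) + kap * DTV d (q (k + 2)%nat) (q (k + 1)%nat))) by (intros; ring).
      rewrite rsum_plus, rsum_minus, rsum_scal, rsum_scal, rsum_scal, rsum_const. ring.
    - intros k Hk. rewrite rsum_plus.
      rewrite (rsum_ext d (fun i => (q (k + 2)%nat i - cc q i k) * lam) (fun i => lam * (q (k + 2)%nat i - cc q i k))) by (intros; ring).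
      rewrite (rsum_ext d (fun i => cc q i k * kap) (fun i => kap * cc q i k)) by (intros; ring).
      rewrite rsum_scal, rsum_scal, rsum_minus.
      destruct (Hq (k + 2)%nat ltac:(lia)) as [_ Hs]. rewrite Hs.
      change (rsum d (fun i => cc q i k)) with (DTV d (q (k + 2)%nat) (q (k + 1)%nat)). ring. }
  rewrite rsum_plus in S2.
  rewrite (rsum_ext d (fun i => maxupto (fun s => q s i) (S T') * ln (INR d)) (fun i => ln (INR d) * maxupto (fun s => q s i) (S T'))) in S2 by (intros; ring).
  rewrite rsum_scal in S2. fold (n_sparse d (S T') q) in S2. rewrite S3 in S2.
  rewrite S_INR in *.
  set (m := m_shift d (S T') q) in *. set (n := n_sparse d (S T') q) in *.
  set (Y := rsum (S T') (fun k => X (S k))) in *.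
  assert (/ eta * Y <= / eta * (n * ln (INR d) + ((INR T' - m) * lam + m * kap))).
  { apply Rmult_le_compat_l; [left; apply Rinv_0_lt_compat; auto | lra]. }
  replace (n * ln (INR d) / eta + eta / 8 * (INR T' + 1) + m / eta * kap + (INR T' + 1 - m - 1) / eta * lam)
    with (/ eta * (n * ln (INR d) + ((INR T' - m) * lam + m * kap)) + (INR T' + 1) * (eta / 8))
    by (field; apply Rgt_not_eq; exact Heta).
  lra.
Qed.
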